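(* For all positive integers $n$ and $j$, \[ \breve K\big(S_n(0)^{5j+1}S_n(1)\big)=\breve K\big(S_n(0)\,S_n(1)^{3j+1}\big). \]
   Context: For finite sequences of positive integers, $\alpha\beta$ denotes concatenation and $\alpha^k$ the concatenation of $k$ copies of $\alpha$. The continued fraction $[a_1;a_2:\dots:a_k]$ means $a_1+1/(a_2+1/(\cdots+1/a_k))$. For a sequence $(a_1,\dots,a_k)$ of positive integers with $k\ge2$, $\breve K(a_1,\dots,a_k)$ is the integer $c$ where $[a_1;a_2:\dots:a_{k-1}]=c/d$ with $\gcd(c,d)=1$, $c,d>0$ (the last entry $a_k$ is omitted). For a positive integer $n$ let $a_n=n^2+3$, $b_n=n^4+5n^2+5$, $S_n(0)=(na_n,na_n)$ and $S_n(1)=(nb_n,nb_n)$. *)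

(* Defs.v *)
From HB Require Import structures.
From mathcomp Require Import all_boot all_order all_algebra.
Set Implicit Arguments. Unset Strict Implicit. Unset Printing Implicit Defensive.
Import Order.TTheory GRing.Theory Num.Theory.

Local Open Scope ring_scope.

(* Value of the finite continued fraction [a_1; a_2 : ... : a_k] as a
   rational number: a_1 + 1/(a_2 + 1/(... + 1/a_k)).  For the empty
   sequence (never used) we return 0. *)
Fixpoint cf_value (s : seq nat) : rat :=
  match s with
  | [::] => 0
  | [:: a] => a%:R
  | a :: t => a%:R + (cf_value t)^-1
  end.

(* Kbreve (a_1,...,a_k): the numerator c of [a_1;...;a_{k-1}] = c/d in
   lowest terms with c,d > 0 (the last entry is dropped).  [numq] is the
   numerator of the reduced representation with positive denominator;
   for positive entries the value is positive so c = numq. *)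
Definition Kbreve (s : seq nat) : int := numq (cf_value (take (size s).-1 s)).

Definition a_n (n : nat) : nat := (n ^ 2 + 3)%N.
Definition b_n (n : nat) : nat := (n ^ 4 + 5 * n ^ 2 + 5)%N.
Definition S0 (n : nat) : seq nat := [:: (n * a_n n)%N; (n * a_n n)%N].
Definition S1 (n : nat) : seq nat := [:: (n * b_n n)%N; (n * b_n n)%N].

Definition seqpow (T : Type) (s : seq T) (k : nat) : seq T := flatten (nseq k s).

(* Main.v *)
Require Import Defs.
From mathcomp Require Import all_boot all_order all_algebra.
From mathcomp Require Import ring.
Import GRing.Theory Num.Theory.

Local Open Scope ring_scope.

Fixpoint cont (s : seq nat) : nat * nat :=
  match s with
  | [::] => (1%N, 0%N)
  | a :: t => ((a * (cont t).1 + (cont t).2)%N, (cont t).1)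
  end.

Lemma cont_pos s : all (fun a => (0 < a)%N) s -> (0 < (cont s).1)%N.
Proof.
elim: s => [|a t IH] //= /andP [ha ht].
by apply: ltn_addr; rewrite muln_gt0 ha IH.
Qed.

Lemma cont_den s : s != [::] -> all (fun a => (0 < a)%N) s -> (0 < (cont s).2)%N.
Proof.
by case: s => [|a t] //= _ /andP [_ ht]; apply: cont_pos.
Qed.

Lemma cont_coprime s : coprime (cont s).1 (cont s).2.
Proof.
elim: s => [|a t IH] /=; first by [].
by rewrite -coprime_modl modnMDl coprime_modl coprime_sym.
Qed.

Lemma cf_cont s : s != [::] -> all (fun a => (0 < a)%N) s ->
  cf_value s = (cont s).1%:R / (cont s).2%:R.
Proof.
elim: s => [|a t IH] //= _ /andP [ha ht].
case: t IH ht => [|b t] IH ht; first by rewrite /= muln1 addn0 divr1.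
rewrite IH // invf_div.
have hp : ((cont (b :: t)).1%:R : rat) != 0.
  by rewrite pnatr_eq0 -lt0n cont_pos.
set p := (cont (b :: t)).1; set q := (cont (b :: t)).2.
rewrite natrD natrM. by field.
Qed.

Lemma numq_cont s : s != [::] -> all (fun a => (0 < a)%N) s ->
  numq (cf_value s) = (cont s).1%:Z.
Proof.
move=> hs hpos; rewrite cf_cont //.
have := coprimeq_num (n := (cont s).1%:Z) (d := (cont s).2%:Z).
rewrite /= cont_coprime => /(_ isT).
have hq := @cont_den s hs hpos.
rewrite gtr0_sg ?ltz_nat // mul1r.
by rewrite !pmulrn.
Qed.

Definition mat := (int * int * int * int)%type.
Definition mmul (X Y : mat) : mat :=
  let: (a, b, c, d) := X in let: (e, f, g, h) := Y in
  (a * e + b * g, a * f + b * h, c * e + d * g, c * f + d * h).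
Definition mv (X : mat) (v : int * int) : int * int :=
  let: (a, b, c, d) := X in (a * v.1 + b * v.2, c * v.1 + d * v.2).
Arguments mmul : simpl never.
Arguments mv : simpl never.
Definition mI : mat := (1, 0, 0, 1).
Definition Mx (a : nat) : mat := (a%:Z, 1, 1, 0).
Fixpoint mprod (s : seq nat) : mat :=
  match s with [::] => mI | a :: t => mmul (Mx a) (mprod t) end.
Fixpoint mpow (X : mat) (k : nat) : mat :=
  match k with 0%N => mI | k'.+1 => mmul X (mpow X k') end.

Lemma mmulA X Y Z : mmul X (mmul Y Z) = mmul (mmul X Y) Z.
Proof.
case: X => [[[a b] c] d]; case: Y => [[[e f] g] h]; case: Z => [[[i j] k] l].
rewrite /mmul; congr (_, _, _, _); ring.
Qed.

Lemma mmul1 X : mmul mI X = X.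
Proof.
case: X => [[[a b] c] d]; rewrite /mmul /mI; congr (_, _, _, _); ring.
Qed.

Lemma mv_mul X Y v : mv (mmul X Y) v = mv X (mv Y v).
Proof.
case: X => [[[a b] c] d]; case: Y => [[[e f] g] h]; case: v => [x y].
rewrite /mmul /mv /=; congr (_, _); ring.
Qed.

Lemma mv1 v : mv mI v = v.
Proof. case: v => x y; rewrite /mv /=; congr (_, _); ring. Qed.

Lemma mprod_cat s t : mprod (s ++ t) = mmul (mprod s) (mprod t).
Proof.
elim: s => [|a s IH]; first by rewrite cat0s mmul1.
by rewrite cat_cons /= IH mmulA.
Qed.

Lemma mpow_add X m k : mpow X (m + k) = mmul (mpow X m) (mpow X k).
Proof.
elim: m => [|m IH]; first by rewrite add0n mmul1.
by rewrite addSn /= IH mmulA.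
Qed.

Lemma mprod_seqpow s k : mprod (seqpow s k) = mpow (mprod s) k.
Proof.
elim: k => [|k IH] //=.
by rewrite /seqpow /= mprod_cat -IH.
Qed.

Lemma cont_mprod s : ((cont s).1%:Z, (cont s).2%:Z) = mv (mprod s) (1, 0).
Proof.
elim: s => [|a s IH] /=; first by rewrite /mv /=; congr (_, _); ring.
rewrite mv_mul -IH /Mx /mv /=; congr (_, _).
  by rewrite -!natz natrD natrM; ring.
ring.
Qed.

Definition mtr (X : mat) : int := let: (a, b, c, d) := X in a + d.
Definition mdet (X : mat) : int := let: (a, b, c, d) := X in a * d - b * c.

Lemma mch X w : mv X (mv X w) =
  (mtr X * (mv X w).1 - mdet X * w.1, mtr X * (mv X w).2 - mdet X * w.2).
Proof.
case: X => [[[a b] c] d]; case: w => [x y]; rewrite /mv /=; congr (_, _); ring.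
Qed.

Lemma mv_lin X t u x y : mv X (t * x.1 - u * y.1, t * x.2 - u * y.2) =
  (t * (mv X x).1 - u * (mv X y).1, t * (mv X x).2 - u * (mv X y).2).
Proof.
case: X => [[[a b] c] d]; case: x => [x1 x2]; case: y => [y1 y2].
rewrite /mv /=; congr (_, _); ring.
Qed.

Definition MxZ (a : int) : mat := (a, 1, 1, 0).

Section Poly.
Variable x : int.
Let A := x * (x ^+ 2 + 3).
Let B := x * (x ^+ 4 + 5 * x ^+ 2 + 5).
Let P := mmul (MxZ A) (mmul (MxZ A) mI).
Let Q := mmul (MxZ B) (mmul (MxZ B) mI).

Lemma tr_eq : mtr (mpow P 5) = mtr (mpow Q 3).
Proof. rewrite /P /Q /A /B /mpow /mmul /MxZ /mI /mtr /=; ring. Qed.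

Lemma det_eq : mdet (mpow P 5) = mdet (mpow Q 3).
Proof. rewrite /P /Q /A /B /mpow /mmul /MxZ /mI /mdet /=; ring. Qed.

Lemma one_eq : (mv (mpow P 6) (B, 1)).1 = (mv P (mv (mpow Q 3) (B, 1))).1.
Proof. rewrite /P /Q /A /B /mpow /mmul /MxZ /mI /mv /=; ring. Qed.

Lemma zero_eq : (mv (mpow P 1) (B, 1)).1 = (mv P (mv (mpow Q 0) (B, 1))).1.
Proof. rewrite /P /Q /A /B /mpow /mmul /MxZ /mI /mv /=; ring. Qed.

Lemma main_eq j :
  (mv (mpow P (5 * j + 1)) (B, 1)).1 = (mv P (mv (mpow Q (3 * j)) (B, 1))).1.
Proof.
pose f j := mv (mpow P (5 * j + 1)) (B, 1).
pose g j := mv (mpow Q (3 * j)) (B, 1).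
have fS k : f k.+1 = mv (mpow P 5) (f k).
  by rewrite /f mulnS -addnA mpow_add mv_mul.
have gS k : g k.+1 = mv (mpow Q 3) (g k).
  by rewrite /g mulnS mpow_add mv_mul.
have fSS k : f k.+2 = (mtr (mpow P 5) * (f k.+1).1 - mdet (mpow P 5) * (f k).1,
                       mtr (mpow P 5) * (f k.+1).2 - mdet (mpow P 5) * (f k).2).
  by rewrite fS fS mch -fS.
have hSS k : mv P (g k.+2) = (mtr (mpow P 5) * (mv P (g k.+1)).1 - mdet (mpow P 5) * (mv P (g k)).1,
                       mtr (mpow P 5) * (mv P (g k.+1)).2 - mdet (mpow P 5) * (mv P (g k)).2).
  by rewrite gS gS mch -gS tr_eq det_eq mv_lin.
suff : (f j).1 = (mv P (g j)).1 /\ (f j.+1).1 = (mv P (g j.+1)).1 by case.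
elim: j => [|k [IH1 IH2]].
  split.
    exact: zero_eq.
  exact: one_eq.
split => //.
by rewrite fSS hSS /= IH1 IH2.
Qed.
End Poly.

Lemma all_seqpow (p : pred nat) s k : all p s -> all p (seqpow s k).
Proof.
move=> hs; elim: k => [|k IH] //=.
by rewrite /seqpow /= all_cat hs.
Qed.

Lemma seqpowS (T : Type) (s : seq T) k : seqpow s (k + 1) = seqpow s k ++ s.
Proof. by rewrite /seqpow nseqD flatten_cat /= cats0. Qed.

Lemma take_last2 (X : seq nat) y z :
  take (size (X ++ [:: y; z])).-1 (X ++ [:: y; z]) = X ++ [:: y].
Proof.
have -> : X ++ [:: y; z] = (X ++ [:: y]) ++ [:: z] by rewrite -catA.
by rewrite size_cat addn1 /= take_size_cat.
Qed.

Lemma Kbreve_eq (X : seq nat) y z : all (fun a => (0 < a)%N) (X ++ [:: y]) ->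
  Kbreve (X ++ [:: y; z]) = (mv (mmul (mprod X) (mmul (Mx y) mI)) (1, 0)).1.
Proof.
move=> hpos; rewrite /Kbreve take_last2 numq_cont //; last first.
  by rewrite -size_eq0 size_cat addn1.
set L := X ++ [:: y].
have -> : ((cont L).1 : int) = (((cont L).1%:Z, (cont L).2%:Z)).1 by [].
by rewrite cont_mprod mprod_cat.
Qed.

Theorem proposition2 (n j : nat) (hn : (0 < n)%N) (hj : (0 < j)%N) :
  Kbreve (seqpow (S0 n) (5 * j + 1) ++ S1 n)
  = Kbreve (S0 n ++ seqpow (S1 n) (3 * j + 1)).
Proof.
set x := n%:Z.
have hA : Mx (n * a_n n) = MxZ (x * (x ^+ 2 + 3)).
  by rewrite /Mx /MxZ /a_n /x -!natz natrM natrD natrX.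
have hB : Mx (n * b_n n) = MxZ (x * (x ^+ 4 + 5 * x ^+ 2 + 5)).
  rewrite /Mx /MxZ /b_n /x -!natz !natrM !natrD !natrX; congr (_, _, _, _); ring.
have pA : (0 < n * a_n n)%N by rewrite muln_gt0 hn /a_n addn3.
have pB : (0 < n * b_n n)%N by rewrite muln_gt0 hn /b_n addnS.
have e0 : mprod (S0 n) = mmul (MxZ (x * (x ^+ 2 + 3))) (mmul (MxZ (x * (x ^+ 2 + 3))) mI).
  by rewrite /S0 /= hA.
have e1 : mprod (S1 n) = mmul (MxZ (x * (x ^+ 4 + 5 * x ^+ 2 + 5))) (mmul (MxZ (x * (x ^+ 4 + 5 * x ^+ 2 + 5))) mI).
  by rewrite /S1 /= hB.
have vB : forall Y, mv (mmul Y (mmul (MxZ (x * (x ^+ 4 + 5 * x ^+ 2 + 5))) mI)) (1, 0)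
   = mv Y (x * (x ^+ 4 + 5 * x ^+ 2 + 5), 1).
  move=> Y; rewrite mv_mul mv_mul mv1; congr (mv Y _).
  by rewrite /mv /MxZ /=; congr (_, _); ring.
rewrite /S1 Kbreve_eq; last first.
  by rewrite all_cat all_seqpow /= ?pA ?pB.
rewrite [seqpow _ (3 * j + 1)]seqpowS catA Kbreve_eq; last first.
  by rewrite !all_cat /= all_seqpow /= ?pA ?pB.
rewrite hB !vB mprod_cat !mprod_seqpow e0 e1 mv_mul.
exact: main_eq.
Qed.
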